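(* Let $\mathcal{M}$ be a circular embedding of a connected graph $X$ on a closed orientable surface, with vertex-face transition matrix $U$, and let $\widehat C=\widehat N^T\widehat M$. Let $\mu\in(0,1)$ be an eigenvalue of $\widehat C\widehat C^T$, and choose $\theta$ with $\cos\theta=2\mu-1$. Let $E_\mu$ be the orthogonal projection onto the $\mu$-eigenspace of $\widehat C\widehat C^T$, let $P=\widehat M\widehat M^T$, and set $W=\widehat NE_\mu\widehat N^T$. Then the $e^{i\theta}$-eigenprojection of $U$ is \[\frac{1}{\sin^2\theta}\Big((\cos\theta+1)W-(e^{i\theta}+1)PW-(e^{-i\theta}+1)WP+2PWP\Big),\] and the $e^{-i\theta}$-eigenprojection of $U$ is \[\frac{1}{\sin^2\theta}\Big((\cos\theta+1)W-(e^{-i\theta}+1)PW-(e^{i\theta}+1)WP+2PWP\Big).\]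
   Context: Setting. A circular embedding is a cellular embedding in which every face is bounded by a cycle. Arcs are ordered pairs $(u,v)$ with $\{u,v\}$ an edge, and $u$ is the tail. Consistent orientation. Fix an orientation of the face boundaries such that each edge shared by two faces receives opposite directions in them. Then every arc lies in exactly one facial walk. Matrices. - $M$ is the arc-face incidence matrix ($M_{(a,b),f}=1$ iff $(a,b)$ lies in the facial walk of $f$). - $N$ is the arc-tail incidence matrix ($N_{(a,b),u}=1$ iff $a=u$). - $\widehat M,\widehat N$ are these matrices with columns scaled to unit length. - $U=(2\widehat M\widehat M^T-I)(2\widehat N\widehat N^T-I)$ is the vertex-face transition matrix. An eigenprojection is the orthogonal projection onto the corresponding eigenspace. *)

(* Defs.v *)
From HB Require Import structures.
From mathcomp Require Import all_boot all_order all_algebra all_fingroup.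
From mathcomp Require Import reals trigo complex.

Set Implicit Arguments.
Unset Strict Implicit.
Unset Printing Implicit Defensive.

Import GRing.Theory Num.Theory.
Local Open Scope ring_scope.

(* A cellular embedding of a connected graph on a closed orientable surface  *)
(* is (up to homeomorphism) the same as a rotation system: at every vertex u *)
(* a cyclic order of the arcs with tail u.  We encode it as a permutation    *)
(* sigma of the arcs preserving tails and acting transitively (as a single   *)
(* cycle) on the arcs with a given tail.  The facial walks (consistently     *)
(* oriented) are the orbits of  phi (u,v) := sigma (v,u).                    *)

Section Graph.
Variables (V : finType) (adj : rel V).

Definition simple_graph : Prop := symmetric adj /\ irreflexive adj.

Definition connected_graph : Prop := forall u v : V, connect adj u v.

Definition darc : finType := {p : V * V | adj p.1 p.2}.

Definition atail (a : darc) : V := (val a).1.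
Definition ahead (a : darc) : V := (val a).2.

Definition rotation_system (sigma : {perm darc}) : Prop :=
  (forall a : darc, atail (sigma a) = atail a) /\
  (forall a b : darc, atail a = atail b -> fconnect sigma a b).

Definition face_next (sigma : {perm darc}) : rel darc :=
  fun a b => [exists r : darc, (val r == (ahead a, atail a)) && (sigma r == b)].

Definition face_of (sigma : {perm darc}) (a : darc) : {set darc} :=
  [set b | connect (face_next sigma) a b].

Definition faces (sigma : {perm darc}) : {set {set darc}} :=
  [set face_of sigma a | a : darc].

(* circular embedding: every facial walk is a cycle, i.e. it has length at
   least 3 and visits pairwise distinct vertices *)
Definition circular (sigma : {perm darc}) : Prop :=
  forall a : darc, {in face_of sigma a &, injective atail} /\
                  (3 <= #|face_of sigma a|)%N.

Variable K : numClosedFieldType.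

Definition nA := #|{: darc}|.
Definition nV := #|{: V}|.

Definition Mmx (sigma : {perm darc}) : 'M[K]_(nA, #|faces sigma|) :=
  \matrix_(i < nA, j < #|faces sigma|)
     ((enum_val i \in (enum_val j : {set darc})) : nat)%:R.

Definition Nmx : 'M[K]_(nA, nV) :=
  \matrix_(i < nA, u < nV) ((atail (enum_val i) == enum_val u) : nat)%:R.

Definition col_normalize m n (A : 'M[K]_(m, n)) : 'M[K]_(m, n) :=
  \matrix_(i, j) (A i j / sqrtC (\sum_(k < m) `|A k j| ^+ 2)).

Definition Mhat (sigma : {perm darc}) := col_normalize (Mmx sigma).
Definition Nhat := col_normalize Nmx.

Definition transition_mx (sigma : {perm darc}) : 'M[K]_nA :=
  (2%:R *: (Mhat sigma *m (Mhat sigma)^T) - 1%:M) *m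
  (2%:R *: (Nhat *m Nhat^T) - 1%:M).

End Graph.

Section Proj.
Variable K : numClosedFieldType.

Definition adjmx m n (A : 'M[K]_(m, n)) : 'M[K]_(n, m) :=
  (map_mx Num.conj A)^T.

Definition is_orth_proj n (S : 'cV[K]_n -> Prop) (E : 'M[K]_n) : Prop :=
  forall x : 'cV[K]_n,
    S (E *m x) /\ (forall y : 'cV[K]_n, S y -> adjmx y *m (x - E *m x) = 0).

Definition eigsp n (A : 'M[K]_n) (lambda : K) : 'cV[K]_n -> Prop :=
  fun x => A *m x = lambda *: x.

Definition is_eigenprojection n (A : 'M[K]_n) (lambda : K) (E : 'M[K]_n) :=
  is_orth_proj (eigsp A lambda) E.

End Proj.

(* Main.v *)
Require Import Defs.
From HB Require Import structures.
From mathcomp Require Import all_boot all_order all_algebra all_fingroup.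
From mathcomp Require Import reals trigo complex.
From mathcomp Require Import ring.
Import GRing.Theory Num.Theory.
Local Open Scope ring_scope.
Set Implicit Arguments.
Unset Strict Implicit.
Section Adj.
Variable K : numClosedFieldType.

Lemma adjmx_mul m n p (A : 'M[K]_(m,n)) (B : 'M[K]_(n,p)) :
  adjmx (A *m B) = adjmx B *m adjmx A.
Proof. by rewrite /adjmx map_mxM trmx_mul. Qed.

Lemma adjmxK m n (A : 'M[K]_(m,n)) : adjmx (adjmx A) = A.
Proof.
rewrite /adjmx map_trmx trmxK -map_mx_comp; apply/matrixP=> i j.
by rewrite !mxE /= conjCK.
Qed.

Lemma adjmxZ m n a (A : 'M[K]_(m,n)) : adjmx (a *: A) = Num.conj a *: adjmx A.
Proof. by apply/matrixP=> i j; rewrite !mxE rmorphM. Qed.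

Lemma adjmxD m n (A B : 'M[K]_(m,n)) : adjmx (A + B) = adjmx A + adjmx B.
Proof. by apply/matrixP=> i j; rewrite !mxE rmorphD. Qed.

Lemma adjmxN m n (A : 'M[K]_(m,n)) : adjmx (- A) = - adjmx A.
Proof. by apply/matrixP=> i j; rewrite !mxE rmorphN. Qed.

Lemma adjmxB m n (A B : 'M[K]_(m,n)) : adjmx (A - B) = adjmx A - adjmx B.
Proof. by rewrite adjmxD adjmxN. Qed.

Lemma adjmx_real_tr m n (A : 'M[K]_(m,n)) : map_mx Num.conj A = A -> adjmx A = A^T.
Proof. by rewrite /adjmx => ->. Qed.

Lemma adjmx_real_tr' m n (A : 'M[K]_(m,n)) : map_mx Num.conj A = A -> adjmx A^T = A.
Proof. by rewrite /adjmx map_trmx trmxK => ->. Qed.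

Lemma ext_col m n (A B : 'M[K]_(m,n)) :
  (forall x : 'cV[K]_n, A *m x = B *m x) -> A = B.
Proof.
move=> h; apply/matrixP=> i j.
by move: (congr1 (fun M : 'cV_m => M i 0) (h (delta_mx j 0))); rewrite -!colE !mxE.
Qed.

Lemma ext_row m n (A B : 'M[K]_(m,n)) :
  (forall x : 'rV[K]_m, x *m A = x *m B) -> A = B.
Proof. by move=> h; apply/row_matrixP=> j; rewrite !rowE h. Qed.

Lemma adj_self0 n (v : 'cV[K]_n) : adjmx v *m v = 0 -> v = 0.
Proof.
move=> /matrixP /(_ 0 0); rewrite !mxE => h.
have h' := @psumr_eq0P _ _ predT (fun i => Num.conj (v i 0) * v i 0).
have {}h' : forall i, Num.conj (v i 0) * v i 0 = 0.
  move=> i; apply: h' => //; first by move=> k _; rewrite mulrC mul_conjC_ge0.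
  by apply: etrans h; apply: eq_bigr => k _; rewrite !mxE.
apply/matrixP=> i j; rewrite (ord1 j) mxE.
by have := h' i; rewrite mulrC => /eqP; rewrite mul_conjC_eq0 => /eqP.
Qed.

End Adj.
Section PA.
Variable K : numClosedFieldType.

Lemma partA n (P Q W : 'M[K]_n) (mu z zb c : K) :
  P *m P = P -> Q *m W = W -> Q *m P *m W = mu *: W ->
  z != 0 -> zb = z^-1 -> c = (z + zb) / 2%:R -> mu = (c + 1) / 2%:R ->
  (2%:R *: P - 1%:M) *m (2%:R *: Q - 1%:M) *m
     ((c + 1) *: W - (z + 1) *: (P *m W) - (zb + 1) *: (W *m P) + 2%:R *: (P *m W *m P))
  = z *: ((c + 1) *: W - (z + 1) *: (P *m W) - (zb + 1) *: (W *m P) + 2%:R *: (P *m W *m P)).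
Proof.
move=> hP hQW hQPW hz0 hzb hc hmu.
have hP' A : A *m P *m P = A *m P by rewrite -mulmxA hP.
have hQW' A : A *m Q *m W = A *m W by rewrite -mulmxA hQW.
have hQPW' A : A *m Q *m P *m W = mu *: (A *m W) by rewrite scalemxAr -hQPW !mulmxA.
do 3 rewrite ?(mulmxDl, mulmxBl, mulmxDr, mulmxBr, mul1mx, mulmx1, mulmxA,
   mulNmx, mulmxN, hP, hP', hQW, hQW', hQPW, hQPW', =^~scalemxAl, =^~scalemxAr).
clear hP' hQW' hQPW'; move: (P *m W *m P) (P *m W) (W *m P) => A B C; clear hQW hQPW; move: W => D.
apply/matrixP => i j; rewrite !mxE.
by rewrite hmu hc hzb; field.
Qed.
End PA.
Section PB.
Variable K : numClosedFieldType.

Lemma P2sq n (P : 'M[K]_n) : P *m P = P ->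
  (2%:R *: P - 1%:M) *m (2%:R *: P - 1%:M) = 1%:M.
Proof.
move=> hP.
rewrite !(mulmxDl, mulmxBl, mulmxDr, mulmxBr, mul1mx, mulmx1, mulNmx, mulmxN,
   =^~scalemxAl, =^~scalemxAr) hP.
clear hP; move: P => A; apply/matrixP=> i j; rewrite !mxE; ring.
Qed.

Lemma partB n m (N : 'M[K]_(n,m)) (P : 'M[K]_n) (E : 'M[K]_m) (y : 'cV[K]_n)
   (mu z zb c s2 : K) :
  P *m P = P -> N *m N^T *m N = N ->
  (forall w : 'cV[K]_m, N^T *m P *m N *m w = mu *: w -> E *m w = w) ->
  (2%:R *: P - 1%:M) *m (2%:R *: (N *m N^T) - 1%:M) *m y = z *: y ->
  z != 0 -> z != 1 -> zb = z^-1 -> c = (z + zb) / 2%:R -> mu = (c + 1) / 2%:R ->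
  s2 = 1 - c ^+ 2 -> s2 != 0 ->
  (s2^-1 *: ((c + 1) *: (N *m E *m N^T) - (z + 1) *: (P *m (N *m E *m N^T))
      - (zb + 1) *: ((N *m E *m N^T) *m P) + 2%:R *: (P *m (N *m E *m N^T) *m P)))
   *m y = y.
Proof.
move=> hP hN hEfix hU hz0 hz1 hzb hc hmu hs2 hs20.
have hNt : N^T *m N *m N^T = N^T.
  by move: (congr1 trmx hN); rewrite !trmx_mul trmxK mulmxA.
have h1 : (2%:R *: (N *m N^T) - 1%:M) *m y = z *: ((2%:R *: P - 1%:M) *m y).
  by move: (congr1 (mulmx (2%:R *: P - 1%:M)) hU); rewrite !mulmxA P2sq // mul1mx -scalemxAr.
have h1' : 2%:R *: (N *m N^T *m y) - y = z *: (2%:R *: (P *m y) - y).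
  by move: h1; rewrite !mulmxBl -!scalemxAl !mul1mx.
have hPb : P *m (N *m N^T *m y) = ((z + 1) / 2%:R) *: (P *m y).
  move: (congr1 (mulmx P) h1');
  rewrite !(mulmxBr, =^~scalemxAr) [P *m (P *m y)]mulmxA hP.
  move: (P *m (N *m N^T *m y)) (P *m y) => X A e.
  apply/matrixP=> i j; move/matrixP/(_ i j): e; rewrite !mxE => e.
  transitivity (((2%:R * X i j - A i j) + A i j) / 2%:R); first by field.
  by rewrite e; field.
have hQa : N *m N^T *m (P *m y) = ((1 + z) / (2%:R * z)) *: (N *m N^T *m y).
  move: (congr1 (mulmx (N *m N^T)) h1');
  rewrite !(mulmxBr, =^~scalemxAr).
  rewrite [N *m N^T *m (N *m N^T *m y)]mulmxA [N *m N^T *m (N *m N^T)]mulmxA hN.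
  move: (N *m N^T *m (P *m y)) (N *m N^T *m y) => X B e.
  apply/matrixP=> i j; move/matrixP/(_ i j): e; rewrite !mxE => e.
  transitivity ((z * (2%:R * X i j - B i j) - (2%:R * B i j - B i j) + B i j + z * B i j) / (2%:R * z)).
    by field.
  by rewrite e; field.
have hNQ (X : 'cV[K]_n) : N^T *m (N *m N^T *m X) = N^T *m X by rewrite !mulmxA hNt.
have hGw : N^T *m P *m N *m (N^T *m y) = mu *: (N^T *m y).
  have -> : N^T *m P *m N *m (N^T *m y) = N^T *m (P *m (N *m N^T *m y)) by rewrite !mulmxA.
  rewrite hPb -scalemxAr -[N^T *m (P *m y)]hNQ hQa -scalemxAr hNQ scalerA.
  by congr (_ *: _); rewrite hmu hc hzb; field.
have hEw := hEfix _ hGw.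
have hW1 : N *m E *m N^T *m y = N *m N^T *m y by rewrite -!mulmxA hEw !mulmxA.
have hW2 : P *m (N *m E *m N^T) *m y = ((z + 1) / 2%:R) *: (P *m y).
  by rewrite -mulmxA hW1 hPb.
have hW3 : N *m E *m N^T *m P *m y = ((1 + z) / (2%:R * z)) *: (N *m N^T *m y).
  rewrite -[N *m E *m N^T *m P *m y]mulmxA -[N *m E *m N^T *m _]mulmxA -hNQ hQa.
  by rewrite -!scalemxAr hNQ -[N *m E *m _]mulmxA hEw mulmxA.
have hW4 : P *m (N *m E *m N^T) *m P *m y
    = ((1 + z) / (2%:R * z) * ((z + 1) / 2%:R)) *: (P *m y).
  rewrite -[P *m _ *m P *m y]mulmxA -[P *m _ *m (P *m y)]mulmxA.
  rewrite [N *m E *m N^T *m (P *m y)]mulmxA hW3 -scalemxAr hPb scalerA.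
  by [].
rewrite -scalemxAl !(mulmxDl, mulmxBl, mulNmx) -!scalemxAl hW1 hW2 hW3 hW4.
clear hU h1 hPb hQa hGw hEw hW1 hW2 hW3 hW4 hNQ hEfix; move: h1'; move: (P *m y) (N *m N^T *m y) => A B; move: y => Y e.
apply/matrixP=> i j; move/matrixP/(_ i j): e; rewrite !mxE => e.
have h1z : 1 - z != 0 by rewrite subr_eq0 eq_sym.
have hy : Y i j = (2%:R * B i j - 2%:R * z * A i j) / (1 - z).
  apply: (mulIf h1z); rewrite mulfVK //.
  apply/eqP; rewrite -subr_eq0; apply/eqP.
  transitivity (- ((2%:R * B i j - Y i j) - z * (2%:R * A i j - Y i j))); first by ring.
  by rewrite e subrr oppr0.
apply: (mulfI hs20); rewrite mulVKf //.
by rewrite hy hs2 hc hzb; field; rewrite h1z hz0.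
Qed.
End PB.
Section Core.
Variable K : numClosedFieldType.

Lemma core n m (N : 'M[K]_(n,m)) (P : 'M[K]_n) (E : 'M[K]_m) (mu z zb c s2 : K) :
  P *m P = P -> adjmx P = P -> N *m N^T *m N = N -> map_mx Num.conj N = N ->
  is_eigenprojection (N^T *m P *m N) mu E ->
  z != 0 -> z != 1 -> zb = z^-1 -> Num.conj z = zb -> c = (z + zb) / 2%:R ->
  mu = (c + 1) / 2%:R -> s2 = 1 - c ^+ 2 -> s2 != 0 ->
  is_eigenprojection ((2%:R *: P - 1%:M) *m (2%:R *: (N *m N^T) - 1%:M)) z
   (s2^-1 *: ((c + 1) *: (N *m E *m N^T) - (z + 1) *: (P *m (N *m E *m N^T))
      - (zb + 1) *: ((N *m E *m N^T) *m P) + 2%:R *: (P *m (N *m E *m N^T) *m P))).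
Proof.
move=> hP hPa hN hNr hE hz0 hz1 hzb hcz hc hmu hs2 hs20.
set G := N^T *m P *m N.
have hGE : G *m E = mu *: E.
  by apply: ext_col => x; rewrite -mulmxA (hE x).1 scalemxAl.
have hEadj : adjmx E *m (1%:M - E) = 0.
  apply: ext_row => r; rewrite mulmx0.
  have -> : r = adjmx (adjmx r) by rewrite adjmxK.
  rewrite mulmxA -adjmx_mul; apply: ext_col => v.
  rewrite mul0mx -mulmxA mulmxBl mul1mx.
  by apply: (hE v).2; exact: (hE (adjmx r)).1.
have e1 : adjmx E = adjmx E *m E.
  by move/eqP: hEadj; rewrite mulmxBr mulmx1 subr_eq0 => /eqP.
have hEh : adjmx E = E.
  have e2 := congr1 (@adjmx _ _ _) e1; rewrite adjmxK adjmx_mul adjmxK in e2.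
  by rewrite e1 -e2.
have hEfix (w : 'cV[K]_m) : G *m w = mu *: w -> E *m w = w.
  move=> hw; apply/eqP; rewrite eq_sym -subr_eq0; apply/eqP; apply: adj_self0.
  rewrite adjmxB mulmxBl (hE w).2 // (hE w).2 ?subrr //; exact: (hE w).1.
have hzbc : Num.conj zb = z by rewrite -hcz conjCK.
have hcc : Num.conj c = c.
  by rewrite hc rmorphM rmorphD /= hcz hzbc fmorphV /= rmorph_nat addrC.
have hsc : Num.conj (s2^-1) = s2^-1.
  by rewrite fmorphV /= hs2 rmorphB /= rmorph1 rmorphXn /= hcc.
set G0 := (c + 1) *: (N *m E *m N^T) - (z + 1) *: (P *m (N *m E *m N^T))
      - (zb + 1) *: ((N *m E *m N^T) *m P) + 2%:R *: (P *m (N *m E *m N^T) *m P).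
have hUG : (2%:R *: P - 1%:M) *m (2%:R *: (N *m N^T) - 1%:M) *m G0 = z *: G0.
  apply: (partA hP _ _ hz0 hzb hc hmu).
    by rewrite !mulmxA hN.
  have -> : N *m N^T *m P *m (N *m E *m N^T) = N *m (G *m E) *m N^T by rewrite !mulmxA.
  by rewrite hGE -scalemxAr -scalemxAl.
have hFa : adjmx (s2^-1 *: G0) = s2^-1 *: G0.
  rewrite /G0 adjmxZ hsc !adjmxD !adjmxN !adjmxZ !adjmx_mul hEh hPa.
  rewrite (adjmx_real_tr' hNr) (adjmx_real_tr hNr).
  rewrite !rmorphD /= rmorph1 hcc hcz hzbc !mulmxA.
  by rewrite (addrAC ((c + 1) *: _)).
move=> x; split.
  by rewrite /eigsp mulmxA -scalemxAr hUG scalerA mulrC -scalerA scalemxAl.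
move=> y hy.
have hFy : (s2^-1 *: G0) *m y = y.
  by apply: (partB hP hN hEfix hy hz0 hz1 hzb hc hmu hs2 hs20).
by rewrite mulmxBr mulmxA -hFa -adjmx_mul hFy subrr.
Qed.
End Core.
Section CN.
Variable K : numClosedFieldType.

Lemma cn_real p q (b : 'I_p -> 'I_q -> bool) :
  map_mx Num.conj (col_normalize (\matrix_(i, j) ((b i j : nat)%:R : K))) =
  col_normalize (\matrix_(i, j) ((b i j : nat)%:R : K)).
Proof.
apply/matrixP=> i j; rewrite !mxE; apply: conj_Creal.
rewrite rpredM ?rpred_nat // rpredV; apply: ger0_real; rewrite sqrtC_ge0; apply: sumr_ge0 => k _; exact: exprn_ge0.
Qed.

Lemma cn_pinv p q (b : 'I_p -> 'I_q -> bool) :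
  (forall i j j', b i j -> b i j' -> j = j') ->
  let B := col_normalize (\matrix_(i, j) ((b i j : nat)%:R : K)) in
  B *m B^T *m B = B.
Proof.
move=> hb B.
pose nj (j : 'I_q) : K := \sum_(k < p) ((b k j : nat)%:R : K).
pose t (j : 'I_q) : K := (sqrtC (nj j))^-1.
have hB k j : B k j = (b k j : nat)%:R * t j.
  rewrite /B /t /nj !mxE; congr (_ * (sqrtC _)^-1); apply: eq_bigr => k' _.
  by rewrite mxE; case: (b k' j); rewrite ?normr1 ?normr0 ?expr1n ?expr0n.
have hBB l j : (B^T *m B) l j = (l == j)%:R * (t j ^+ 2 * nj j).
  rewrite mxE; under eq_bigr do rewrite mxE !hB.
  case: (eqVneq l j) => [<-|hlj].
    rewrite mul1r /nj big_distrr; apply: eq_bigr => k _.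
    by case: (b k l); rewrite /= ?mul0r ?mulr0 // !mul1r mulr1 expr2.
  rewrite mul0r; apply: big1 => k _.
  case bl: (b k l); case bj: (b k j); rewrite ?mul0r ?mulr0 //.
  by move: hlj; rewrite (hb _ _ _ bl bj) eqxx.
rewrite -mulmxA; apply/matrixP=> i j; rewrite mxE.
under eq_bigr do rewrite hBB.
rewrite (bigD1 j) //= big1 ?addr0; last first.
  by move=> l /negPf ->; rewrite mul0r mulr0.
rewrite eqxx mul1r.
have [hn|hn] := eqVneq (nj j) 0.
  by rewrite hn mulr0 mulr0 hB /t hn sqrtC0 invr0 mulr0.
by rewrite /t exprVn sqrtCK mulVf // mulr1.
Qed.
End CN.
Section GraphFacts.
Variables (V : finType) (adj : rel V).
Hypothesis hs : symmetric adj.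

Lemma rev_ok (a : darc adj) : adj (ahead a) (atail a).
Proof. by rewrite hs; exact: (valP a). Qed.

Definition rev_darc (a : darc adj) : darc adj :=
  exist (fun p : V * V => adj p.1 p.2) (ahead a, atail a) (rev_ok a).

Lemma rev_darcK : involutive rev_darc.
Proof. by move=> a; apply: val_inj; case: a => [[x y] h]. Qed.

Variable sigma : {perm darc adj}.

Lemma face_nextE : face_next sigma =2 frel (fun a => sigma (rev_darc a)).
Proof.
move=> a b; rewrite /face_next /=; apply/existsP/eqP.
  case=> r /andP[/eqP hr /eqP <-]; congr (sigma _); apply: val_inj; exact: (esym hr).
by move=> <-; exists (rev_darc a); rewrite !eqxx.
Qed.

Lemma face_connect_sym : connect_sym (face_next sigma).
Proof.
move=> x y; rewrite !(eq_connect face_nextE); apply: fconnect_sym.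
by move=> a b /perm_inj /(can_inj rev_darcK).
Qed.

Lemma face_unique (x a1 a2 : darc adj) :
  x \in face_of sigma a1 -> x \in face_of sigma a2 -> face_of sigma a1 = face_of sigma a2.
Proof.
rewrite !inE => h1 h2; apply/setP => y; rewrite !inE.
apply: same_connect; first exact: face_connect_sym.
by apply: connect_trans h1 _; rewrite face_connect_sym.
Qed.

Lemma faces_row (i : 'I_(nA adj)) (j j' : 'I_#|faces sigma|) :
  enum_val i \in (enum_val j : {set darc adj}) ->
  enum_val i \in (enum_val j' : {set darc adj}) -> j = j'.
Proof.
move=> h1 h2; apply: enum_val_inj.
have /imsetP [a1 _ e1] := enum_valP j.
have /imsetP [a2 _ e2] := enum_valP j'.
by rewrite e1 e2; apply: (face_unique (x := enum_val i)); rewrite -?e1 -?e2.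
Qed.

End GraphFacts.

Lemma tails_row (V : finType) (adj : rel V) (i : 'I_(nA adj)) (u u' : 'I_(nV V)) :
  atail (enum_val i) == enum_val u -> atail (enum_val i) == enum_val u' -> u = u'.
Proof. by move=> /eqP h1 /eqP h2; apply: enum_val_inj; rewrite -h1 -h2. Qed.
Local Open Scope complex_scope.
Section Cx.
Variable R : realType.

Lemma conj_realC (x : R) : Num.conj (x%:C) = x%:C.
Proof.
apply: conj_Creal; rewrite realE.
have -> : (x%:C <= 0) = (x <= 0) by exact: (lecR x 0).
by rewrite ler0c; move: (num_real x); rewrite realE.
Qed.

Lemma cplxE (a b : R) : a +i* b = a%:C + 'i * b%:C.
Proof. by rewrite -complexiE; simpc. Qed.

Lemma cplxJ (a b : R) : Num.conj (a +i* b) = a -i* b.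
Proof.
rewrite cplxE rmorphD rmorphM /= conjCi !conj_realC.
by rewrite -complexiE; simpc.
Qed.

Lemma cplxM (a b : R) : (a +i* b) * (a -i* b) = (a ^+ 2 + b ^+ 2)%:C.
Proof. by simpc; rewrite !expr2 (mulrC b a) addNr. Qed.

End Cx.

Unset Implicit Arguments.
Local Open Scope complex_scope.

Theorem corollary3p5 (R : realType) (V : finType) (adj : rel V)
  (sigma : {perm darc adj}) :
  simple_graph adj -> connected_graph adj ->
  rotation_system sigma -> circular sigma ->
  forall (mu : R), 0 < mu < 1 ->
  let Chat := (Nhat adj R[i])^T *m Mhat R[i] sigma in
  eigenvalue (Chat *m Chat^T) mu%:C ->
  forall theta : R, cos theta = 2 * mu - 1 ->
  forall Emu : 'M[R[i]]_(nV V),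
  is_eigenprojection (Chat *m Chat^T) mu%:C Emu ->
  let U := transition_mx R[i] sigma in
  let P := Mhat R[i] sigma *m (Mhat R[i] sigma)^T in
  let W := Nhat adj R[i] *m Emu *m (Nhat adj R[i])^T in
  let z := cos theta +i* sin theta in
  let zb := cos theta -i* sin theta in
  is_eigenprojection U z
    (((sin theta ^+ 2)%:C)^-1 *:
       ((cos theta + 1)%:C *: W - (z + 1) *: (P *m W) - (zb + 1) *: (W *m P)
        + 2%:R *: (P *m W *m P))) /\
  is_eigenprojection U zb
    (((sin theta ^+ 2)%:C)^-1 *:
       ((cos theta + 1)%:C *: W - (zb + 1) *: (P *m W) - (z + 1) *: (W *m P)
        + 2%:R *: (P *m W *m P))).
Proof.
move=> [hsym _] _ _ _ mu /andP[hmu0 hmu1] Chat _ theta hcos Emu hE U P W z zb.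
set Nh := Nhat adj R[i].
set Mh := Mhat R[i] sigma.
have hNN : Nh *m Nh^T *m Nh = Nh.
  exact: (@cn_pinv _ _ _ (fun i u => atail (enum_val i) == enum_val u) (@tails_row V adj)).
have hNr : map_mx Num.conj Nh = Nh.
  exact: (@cn_real _ _ _ (fun i u => atail (enum_val i) == enum_val u)).
have hMM : Mh *m Mh^T *m Mh = Mh.
  exact: (@cn_pinv _ _ _ (fun i j => enum_val i \in (enum_val j : {set darc adj}))
            (@faces_row V adj hsym sigma)).
have hMr : map_mx Num.conj Mh = Mh.
  exact: (@cn_real _ _ _ (fun i j => enum_val i \in (enum_val j : {set darc adj}))).
have hP2 : P *m P = P by rewrite /P mulmxA hMM.
have hPa : adjmx P = P.
  by rewrite /P adjmx_mul (adjmx_real_tr' hMr) (adjmx_real_tr hMr).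
have hG : Chat *m Chat^T = Nh^T *m P *m Nh by rewrite /Chat /P trmx_mul trmxK !mulmxA.
rewrite hG in hE.
set c := (cos theta)%:C.
have hzzb : z * zb = 1 by rewrite /z /zb cplxM cos2Dsin2.
have hz0 : z != 0.
  by apply/eqP => h; move: hzzb; rewrite h mul0r => /eqP; rewrite eq_sym oner_eq0.
have hzb0 : zb != 0.
  by apply/eqP => h; move: hzzb; rewrite h mulr0 => /eqP; rewrite eq_sym oner_eq0.
have hzb : zb = z^-1 by rewrite -[zb]mul1r -(mulVf hz0) -mulrA hzzb mulr1.
have hzbz : z = zb^-1 by rewrite hzb invrK.
have hcz : Num.conj z = zb by rewrite /z cplxJ.
have hczb : Num.conj zb = z by rewrite -hcz conjCK.
have hc : c = (z + zb) / 2%:R.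
  by rewrite /c /z /zb !cplxE rmorphN /=; field.
have hmu : mu%:C = (c + 1) / 2%:R.
  by rewrite /c hcos rmorphB rmorphM rmorph_nat rmorph1 /=; field.
have hs2 : (sin theta ^+ 2)%:C = 1 - c ^+ 2.
  by rewrite sin2cos2 rmorphB rmorph1 rmorphXn.
have hs20 : (sin theta ^+ 2)%:C != 0.
  rewrite fmorph_eq0 sin2cos2 hcos.
  have -> : 1 - (2 * mu - 1) ^+ 2 = 4%:R * mu * (1 - mu) by ring.
  by rewrite Order.POrderTheory.gt_eqF // !mulr_gt0 // subr_gt0.
have hz1 : z != 1.
  apply: contra_neq hs20 => hz; rewrite hs2 hc hzb hz invr1; apply/eqP.
  by rewrite subr_eq0 eq_sym; apply/eqP; field.
have hzb1 : zb != 1 by rewrite hzb; apply: contra_neq hz1 => h; rewrite -[z]invrK h invr1.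
have hc1 : (cos theta + 1)%:C = c + 1 by rewrite rmorphD rmorph1.
rewrite hc1; split.
  exact: (core hP2 hPa hNN hNr hE hz0 hz1 hzb hcz hc hmu hs2 hs20).
apply: (core hP2 hPa hNN hNr hE hzb0 hzb1 hzbz hczb _ hmu hs2 hs20).
by rewrite hc addrC.
Qed.
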